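(* If $(X_A,\sigma_A)$ and $(X_B,\sigma_B)$ are one-sided flow equivalent, then they are continuously orbit equivalent.
   Context: Let $N,M>1$ and let $A$ ($N\times N$), $B$ ($M\times M$) be irreducible $\{0,1\}$-matrices which are not permutation matrices. $X_A$ is the compact space of sequences $(x_n)_{n\in\mathbb N}$ with $x_n\in\{1,\dots,N\}$, $A(x_n,x_{n+1})=1$, and $\sigma_A((x_n)_n)=(x_{n+1})_n$; similarly $(X_B,\sigma_B)$. $\mathbb Z_+$, $\mathbb R_+$ denote nonnegative integers/reals. $H^A$ is the quotient of $C(X_A,\mathbb Z)$ by $\{u-u\circ\sigma_A\}$, $H^A_+$ the classes of $\mathbb Z_+$-valued continuous functions; $[f]\in H^A_+$ is an order unit if for every $[u]\in H^A$ some $n\in\mathbb N$ has $n[f]-[u]\in H^A_+$. A suspension triplet for $(X_A,\sigma_A)$ is $(l,k,b)$ with $l,k\in C(X_A,\mathbb R_+)$, $b\in C(X_A,\mathbb R)$, $c=l-k$ integer-valued with $[c]$ an order unit, and $l-b$, $k-b\circ\sigma_A$ $\mathbb Z_+$-valued. $S^{l,k}_{A,b}$ is the quotient of $\{(x,r)\in X_A\times\mathbb R: r\ge b(x)\}$ by the equivalence relation generated by $(x,r)\sim(\sigma_A(x),r-c(x))$ for $r\ge l(x)$, with classes $[x,r]$ and flow $\phi_{A,t}([x,r])=[x,r+t]$ ($t\in\mathbb R_+$); $S^1_A:=S^{1,0}_{A,0}$ and $s_A(x)=[x,0]$. One-sided flow equivalence: there are suspension triplets $(l_1,k_1,b_1)$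 for $A$ and $(l_2,k_2,b_2)$ for $B$, a homeomorphism $h:X_A\to X_B$ and continuous $\Phi_1:S^{l_1,k_1}_{A,b_1}\to S^1_B$, $\Phi_2:S^{l_2,k_2}_{B,b_2}\to S^1_A$ with $\Phi_1\circ\phi_{A,t}=\phi_{B,t}\circ\Phi_1$, $\Phi_2\circ\phi_{B,t}=\phi_{A,t}\circ\Phi_2$ for all $t\in\mathbb R_+$, $\Phi_1([x,b_1(x)])=s_B(h(x))$ and $\Phi_2([y,b_2(y)])=s_A(h^{-1}(y))$. Continuous orbit equivalence: there are a homeomorphism $h:X_A\to X_B$ and continuous $k_1,l_1:X_A\to\mathbb Z_+$, $k_2,l_2:X_B\to\mathbb Z_+$ with $\sigma_B^{k_1(x)}(h(\sigma_A(x)))=\sigma_B^{l_1(x)}(h(x))$ for all $x\in X_A$ and $\sigma_A^{k_2(y)}(h^{-1}(\sigma_B(y)))=\sigma_A^{l_2(y)}(h^{-1}(y))$ for all $y\in X_B$. *)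

(* Defs.v *)
From Stdlib Require Import Reals Relations ZArith.
From mathcomp Require Import all_boot all_order all_algebra all_fingroup.

Set Implicit Arguments.
Unset Strict Implicit.
Unset Printing Implicit Defensive.

Section Matrices.
Local Open Scope ring_scope.
Import GRing.Theory Num.Theory.

Definition zero_one_mx (N : nat) (A : 'M[int]_N) : Prop :=
  forall i j, A i j = 0 \/ A i j = 1.

Definition irreducible_mx (N : nat) (A : 'M[int]_N) : Prop :=
  forall i j : 'I_N, exists n : nat, (0 < n)%N /\ 0 < (A ^+ n) i j.

Definition is_permutation_mx (N : nat) (A : 'M[int]_N) : Prop :=
  exists s : 'S_N, A = perm_mx s.

Definition seqs (N : nat) : Type := nat -> 'I_N.

Definition XA (N : nat) (A : 'M[int]_N) (x : seqs N) : Prop :=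
  forall n : nat, A (x n) (x n.+1) = 1.
End Matrices.

Open Scope R_scope.

Definition shift (N : nat) (x : seqs N) : seqs N := fun n => x n.+1.

Definition agree (N : nat) (n : nat) (x y : seqs N) : Prop :=
  forall i : nat, (i < n)%N -> x i = y i.

(* Continuity w.r.t. the product topology of discrete 'I_N on nat -> 'I_N,
   restricted (subspace topology) to a subset X. *)
Definition cont_real (N : nat) (X : seqs N -> Prop) (f : seqs N -> R) : Prop :=
  forall x, X x -> forall eps, 0 < eps ->
    exists n, forall y, X y -> agree n x y -> Rabs (f y - f x) < eps.

Definition cont_int (N : nat) (X : seqs N -> Prop) (f : seqs N -> Z) : Prop :=
  forall x, X x -> exists n, forall y, X y -> agree n x y -> f y = f x.

Definition cont_nat (N : nat) (X : seqs N -> Prop) (f : seqs N -> nat) : Prop :=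
  forall x, X x -> exists n, forall y, X y -> agree n x y -> f y = f x.

Definition cont_map (N M : nat) (X : seqs N -> Prop) (f : seqs N -> seqs M) : Prop :=
  forall x, X x -> forall m, exists n, forall y, X y -> agree n x y -> agree m (f x) (f y).

Definition homeo (N M : nat) (X : seqs N -> Prop) (Y : seqs M -> Prop)
    (h : seqs N -> seqs M) (hinv : seqs M -> seqs N) : Prop :=
  (forall x, X x -> Y (h x)) /\ (forall y, Y y -> X (hinv y)) /\
  (forall x, X x -> hinv (h x) = x) /\ (forall y, Y y -> h (hinv y) = y) /\
  cont_map X h /\ cont_map Y hinv.

(* [c] is an order unit of (H^A, H^A_+), where
   H^A = C(X_A,Z) / {u - u o sigma_A}:  for every [u] in H^A there is n with
   n[c] - [u] in H^A_+, i.e. n c - u = g + v - v o sigma_A with g continuous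
   Z_+-valued and v continuous Z-valued. *)
Definition order_unit (N : nat) (A : 'M[int]_N) (c : seqs N -> Z) : Prop :=
  forall u : seqs N -> Z, cont_int (XA A) u ->
    exists n : nat, exists g v : seqs N -> Z,
      cont_int (XA A) g /\ cont_int (XA A) v /\
      (forall x, XA A x -> Z.le 0 (g x)) /\
      (forall x, XA A x ->
         Z.sub (Z.mul (Z.of_nat n) (c x)) (u x) = Z.sub (Z.add (g x) (v x)) (v (shift x))).

Definition susp_triplet (N : nat) (A : 'M[int]_N) (l k b : seqs N -> R) : Prop :=
  cont_real (XA A) l /\ cont_real (XA A) k /\ cont_real (XA A) b /\
  (forall x, XA A x -> 0 <= l x /\ 0 <= k x) /\
  (exists c : seqs N -> Z,
     cont_int (XA A) c /\ (forall x, XA A x -> l x - k x = IZR (c x)) /\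
     order_unit A c) /\
  (forall x, XA A x -> exists m : nat, l x - b x = INR m) /\
  (forall x, XA A x -> exists m : nat, k x - b (shift x) = INR m).

Definition pt (N : nat) : Type := (seqs N * R)%type.

Definition susp_dom (N : nat) (A : 'M[int]_N) (b : seqs N -> R) (p : pt N) : Prop :=
  XA A p.1 /\ b p.1 <= p.2.

Definition susp_step (N : nat) (A : 'M[int]_N) (l k b : seqs N -> R) (p q : pt N) : Prop :=
  susp_dom A b p /\ l p.1 <= p.2 /\ q = (shift p.1, p.2 - (l p.1 - k p.1)).

(* The equivalence relation generated; S^{l,k}_{A,b} is the quotient of
   susp_dom A b by it. *)
Definition susp_eqv (N : nat) (A : 'M[int]_N) (l k b : seqs N -> R) : relation (pt N) :=
  clos_refl_sym_trans (pt N) (susp_step A l k b).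

(* Data for S^1_A = S^{1,0}_{A,0}. *)
Definition one_f (N : nat) : seqs N -> R := fun _ => 1.
Definition zero_f (N : nat) : seqs N -> R := fun _ => 0.

(* Relatively open subsets of D (D a subset of X_A x R with the product
   topology, basic opens: cylinder x open interval). *)
Definition rel_open (N : nat) (D : pt N -> Prop) (U : pt N -> Prop) : Prop :=
  forall p, D p -> U p -> exists n : nat, exists eps : R, 0 < eps /\
    forall q, D q -> agree n p.1 q.1 -> Rabs (q.2 - p.2) < eps -> U q.

Definition saturated (N : nat) (D : pt N -> Prop) (E : relation (pt N))
    (V : pt N -> Prop) : Prop :=
  forall p q, D p -> D q -> E p q -> V p -> V q.

(* A map Phi : S^{l,k}_{A,b} -> S^1_B, given by a lift Phi' on representatives:
   it sends the domain into the domain, respects the equivalence relations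
   (so it induces a map on the quotients), is continuous for the quotient
   topologies (preimage of a quotient-open set is quotient-open; quotient-open
   sets of S^1_B correspond to saturated relatively open subsets of the
   domain), and intertwines the flows phi_{A,t}, phi_{B,t} (t >= 0). *)
Definition susp_map (N M : nat) (A : 'M[int]_N) (l k b : seqs N -> R)
    (B : 'M[int]_M) (Phi : pt N -> pt M) : Prop :=
  (forall p, susp_dom A b p -> susp_dom B (@zero_f M) (Phi p)) /\
  (forall p q, susp_dom A b p -> susp_dom A b q -> susp_eqv A l k b p q ->
     susp_eqv B (@one_f M) (@zero_f M) (@zero_f M) (Phi p) (Phi q)) /\
  (forall V : pt M -> Prop,
     saturated (susp_dom B (@zero_f M)) (susp_eqv B (@one_f M) (@zero_f M) (@zero_f M)) V ->
     rel_open (susp_dom B (@zero_f M)) V ->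
     rel_open (susp_dom A b) (fun p => V (Phi p))) /\
  (forall p t, susp_dom A b p -> 0 <= t ->
     susp_eqv B (@one_f M) (@zero_f M) (@zero_f M)
       (Phi (p.1, p.2 + t)) ((Phi p).1, (Phi p).2 + t)).

Definition one_sided_flow_equiv (N M : nat) (A : 'M[int]_N) (B : 'M[int]_M) : Prop :=
  exists (l1 k1 b1 : seqs N -> R) (l2 k2 b2 : seqs M -> R)
         (h : seqs N -> seqs M) (hinv : seqs M -> seqs N)
         (Phi1 : pt N -> pt M) (Phi2 : pt M -> pt N),
    susp_triplet A l1 k1 b1 /\ susp_triplet B l2 k2 b2 /\
    homeo (XA A) (XA B) h hinv /\
    susp_map A l1 k1 b1 B Phi1 /\ susp_map B l2 k2 b2 A Phi2 /\
    (forall x, XA A x ->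
       susp_eqv B (@one_f M) (@zero_f M) (@zero_f M) (Phi1 (x, b1 x)) (h x, 0)) /\
    (forall y, XA B y ->
       susp_eqv A (@one_f N) (@zero_f N) (@zero_f N) (Phi2 (y, b2 y)) (hinv y, 0)).

Definition cont_orbit_equiv (N M : nat) (A : 'M[int]_N) (B : 'M[int]_M) : Prop :=
  exists (h : seqs N -> seqs M) (hinv : seqs M -> seqs N)
         (k1 l1 : seqs N -> nat) (k2 l2 : seqs M -> nat),
    homeo (XA A) (XA B) h hinv /\
    cont_nat (XA A) k1 /\ cont_nat (XA A) l1 /\
    cont_nat (XA B) k2 /\ cont_nat (XA B) l2 /\
    (forall x, XA A x ->
       iter (k1 x) (@shift M) (h (shift x)) = iter (l1 x) (@shift M) (h x)) /\
    (forall y, XA B y ->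
       iter (k2 y) (@shift N) (hinv (shift y)) = iter (l2 y) (@shift N) (hinv y)).

(* Main.v *)
From Stdlib Require Import Lra Classical ClassicalEpsilon.
Require Import Defs.
From Stdlib Require Import Reals Relations ZArith.
From mathcomp Require Import all_boot all_order all_algebra all_fingroup.

Set Implicit Arguments.
Local Open Scope R_scope.

Lemma choice_nat (T : Type) (P : T -> nat -> Prop) :
  (forall x, exists m, P x m) -> exists f : T -> nat, forall x, P x (f x).
Proof.
  intros H.
  exists (fun x => proj1_sig (constructive_indefinite_description _ (H x))).
  intro x; exact (proj2_sig (constructive_indefinite_description _ (H x))).
Qed.

Lemma XA_shift (N : nat) (A : 'M[int]_N) (x : seqs N) : XA A x -> XA A (Defs.shift x).
Proof. intros H n; apply H. Qed.

Lemma agree_le (N : nat) n m (x y : seqs N) :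
  (n <= m)%N -> agree m x y -> agree n x y.
Proof. intros Hle H i Hi; apply H; exact (leq_trans Hi Hle). Qed.

Lemma agree_shift (N : nat) n (x y : seqs N) :
  agree n.+1 x y -> agree n (Defs.shift x) (Defs.shift y).
Proof. intros H i Hi; unfold Defs.shift; apply H; by rewrite ltnS. Qed.

Lemma INR_close (a b : nat) : Rabs (INR a - INR b) < 1 -> a = b.
Proof.
  intros H.
  destruct (Nat.lt_total a b) as [h|[h|h]]; auto; exfalso.
  - assert (Hle: (S a <= b)%coq_nat) by exact h.
    apply le_INR in Hle; rewrite S_INR in Hle.
    revert H; unfold Rabs; destruct (Rcase_abs _); lra.
  - assert (Hle: (S b <= a)%coq_nat) by exact h.
    apply le_INR in Hle; rewrite S_INR in Hle.
    revert H; unfold Rabs; destruct (Rcase_abs _); lra.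
Qed.

Lemma eqv_flow (N : nat) (A : 'M[int]_N) l k b (p q : pt N) t :
  0 <= t -> susp_eqv A l k b p q ->
  susp_eqv A l k b (p.1, p.2 + t) (q.1, q.2 + t).
Proof.
  intros Ht H; induction H.
  - apply rst_step. destruct H as [[Hd1 Hd2] [Hl ->]].
    split; [split; simpl; [exact Hd1| lra]|split; [simpl; lra|]].
    simpl; f_equal; ring.
  - apply rst_refl.
  - apply rst_sym; assumption.
  - eapply rst_trans; eassumption.
Qed.

Definition Ginv (M : nat) (p : pt M) (z : seqs M) (r : R) : Prop :=
  exists n : nat, z = iter n (@Defs.shift M) p.1 /\ r = p.2 - INR n /\ 0 <= r < 1.

Lemma G_eqv (M : nat) (B : 'M[int]_M) (p q : pt M) :
  susp_eqv B (@one_f M) (@zero_f M) (@zero_f M) p q ->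
  forall z r, Ginv p z r <-> Ginv q z r.
Proof.
  intros H; induction H; intros w s.
  - destruct H as [_ [Hl ->]]. unfold one_f, zero_f in *. simpl. split.
    + intros [n [Hz [Hr Hb]]]. destruct n as [|n].
      * simpl in Hr. lra.
      * exists n. rewrite S_INR in Hr. split; [rewrite Hz iterSr; reflexivity|].
        simpl; split; [lra|split; lra].
    + intros [n [Hz [Hr Hb]]]. exists n.+1. rewrite S_INR iterSr -Hz. cbn [fst snd] in *.
      split; [reflexivity|split; [lra|split; lra]].
  - tauto.
  - rewrite IHclos_refl_sym_trans; tauto.
  - rewrite IHclos_refl_sym_trans1; auto.
Qed.

Lemma eqv_int (M : nat) (B : 'M[int]_M) (y y' : seqs M) (m m' : nat) :
  susp_eqv B (@one_f M) (@zero_f M) (@zero_f M) (y, INR m) (y', INR m') ->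
  iter m (@Defs.shift M) y = iter m' (@Defs.shift M) y'.
Proof.
  intros H.
  have Hg : Ginv (y, INR m) (iter m (@Defs.shift M) y) 0.
  { exists m; simpl; split; [reflexivity|split; lra]. }
  apply (G_eqv H) in Hg. destruct Hg as [n [Hz [Hr _]]]. simpl in *.
  assert (INR n = INR m') by lra. apply INR_eq in H0. subst; exact Hz.
Qed.

Lemma side (N M : nat) (A : 'M[int]_N) (B : 'M[int]_M) l k b
  (Phi : pt N -> pt M) (h : seqs N -> seqs M) :
  susp_triplet A l k b -> susp_map A l k b B Phi ->
  (forall x, XA A x ->
     susp_eqv B (@one_f M) (@zero_f M) (@zero_f M) (Phi (x, b x)) (h x, 0)) ->
  exists k1 l1 : seqs N -> nat,
    cont_nat (XA A) k1 /\ cont_nat (XA A) l1 /\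
    (forall x, XA A x ->
       iter (k1 x) (@Defs.shift M) (h (Defs.shift x)) = iter (l1 x) (@Defs.shift M) (h x)).
Proof.
  intros [cl [ck [cb [nonneg [_ [Hlb Hkb]]]]]] [_ [Hresp [_ Hflow]]] Hbase.
  have HL : forall x, exists m : nat, XA A x -> l x - b x = INR m.
  { intro x; destruct (classic (XA A x)) as [H|H].
    - destruct (Hlb x H) as [m Hm]; exists m; auto.
    - exists 0%nat; tauto. }
  have HK : forall x, exists m : nat, XA A x -> k x - b (Defs.shift x) = INR m.
  { intro x; destruct (classic (XA A x)) as [H|H].
    - destruct (Hkb x H) as [m Hm]; exists m; auto.
    - exists 0%nat; tauto. }
  destruct (@choice_nat _ _ HL) as [l1 Hl1].
  destruct (@choice_nat _ _ HK) as [k1 Hk1].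
  exists k1, l1. split; [|split].
  - intros x Hx.
    destruct (ck x Hx (1/2)) as [n1 H1]; [lra|].
    destruct (cb (Defs.shift x) (XA_shift Hx) (1/2)) as [n2 H2]; [lra|].
    exists (maxn n1 n2.+1). intros y Hy Hag.
    apply INR_close. rewrite <- (Hk1 y Hy), <- (Hk1 x Hx).
    have := H1 y Hy (@agree_le _ _ _ _ _ (leq_maxl _ _) Hag).
    have := H2 (Defs.shift y) (XA_shift Hy) (agree_shift (@agree_le _ _ _ _ _ (leq_maxr _ _) Hag)).
    unfold Rabs; repeat destruct (Rcase_abs _); lra.
  - intros x Hx.
    destruct (cl x Hx (1/2)) as [n1 H1]; [lra|].
    destruct (cb x Hx (1/2)) as [n2 H2]; [lra|].
    exists (maxn n1 n2). intros y Hy Hag.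
    apply INR_close. rewrite <- (Hl1 y Hy), <- (Hl1 x Hx).
    have := H1 y Hy (@agree_le _ _ _ _ _ (leq_maxl _ _) Hag).
    have := H2 y Hy (@agree_le _ _ _ _ _ (leq_maxr _ _) Hag).
    unfold Rabs; repeat destruct (Rcase_abs _); lra.
  - intros x Hx. symmetry. apply (@eqv_int M B).
    have Hsx := XA_shift Hx.
    pose proof (Hl1 x Hx) as El. pose proof (Hk1 x Hx) as Ek.
    pose proof (pos_INR (l1 x)) as P1. pose proof (pos_INR (k1 x)) as P2.
    have E1 : susp_eqv B (@one_f M) (@zero_f M) (@zero_f M)
                (h x, INR (l1 x)) (Phi (x, l x)).
    { have := eqv_flow P1 (Hbase x Hx). simpl. rewrite Rplus_0_l. intro Hf.
      apply rst_sym in Hf. eapply rst_trans; [exact Hf|].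
      apply rst_sym.
      replace (l x) with ((x, b x).1, (x, b x).2 + INR (l1 x)).2 by (simpl; lra).
      apply (Hflow (x, b x) (INR (l1 x))); [split; simpl; [exact Hx|lra]|exact P1]. }
    have E2 : susp_eqv B (@one_f M) (@zero_f M) (@zero_f M)
                (Phi (Defs.shift x, k x)) (h (Defs.shift x), INR (k1 x)).
    { have := eqv_flow P2 (Hbase (Defs.shift x) Hsx). simpl. rewrite Rplus_0_l. intro Hf.
      eapply rst_trans; [|exact Hf].
      replace (k x) with ((Defs.shift x, b (Defs.shift x)).1, (Defs.shift x, b (Defs.shift x)).2 + INR (k1 x)).2 by (simpl; lra).
      apply (Hflow (Defs.shift x, b (Defs.shift x)) (INR (k1 x))); [split; simpl; [exact Hsx|lra]|exact P2]. }
    have E3 : susp_eqv B (@one_f M) (@zero_f M) (@zero_f M)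
                (Phi (x, l x)) (Phi (Defs.shift x, k x)).
    { apply Hresp; [split; simpl; [exact Hx|lra]|split; simpl; [exact Hsx|lra]|].
      apply rst_step. split; [split; simpl; [exact Hx|lra]|split; [simpl; lra|]].
      simpl; f_equal; ring. }
    eapply rst_trans; [exact E1|]. eapply rst_trans; [exact E3|exact E2].
Qed.

Theorem proposition3p3 (N M : nat) (A : 'M[int]_N) (B : 'M[int]_M) :
  (1 < N)%N -> (1 < M)%N ->
  zero_one_mx A -> zero_one_mx B ->
  irreducible_mx A -> irreducible_mx B ->
  ~ is_permutation_mx A -> ~ is_permutation_mx B ->
  one_sided_flow_equiv A B -> cont_orbit_equiv A B.
Proof.
  intros _ _ _ _ _ _ _ _
    [l1 [k1 [b1 [l2 [k2 [b2 [h [hinv [Phi1 [Phi2 [T1 [T2 [Hh [S1 [S2 [B1 B2]]]]]]]]]]]]]]]].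
  destruct (@side _ _ _ _ _ _ _ _ h T1 S1 B1) as [kk1 [ll1 [Ck1 [Cl1 E1]]]].
  destruct (@side _ _ _ _ _ _ _ _ hinv T2 S2 B2) as [kk2 [ll2 [Ck2 [Cl2 E2]]]].
  exists h, hinv, kk1, ll1, kk2, ll2. split; [exact Hh|]. split; [exact Ck1|]. split; [exact Cl1|]. split; [exact Ck2|]. split; [exact Cl2|]. split; [exact E1|exact E2].
Qed.
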